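(* There exists $C\in(0,\infty)$ such that for all $N\in\mathbb N$, $\lambda\in(0,\infty)$, $n\in\mathbb N$ with $U_{N,\lambda}(n)>0$, and $M>0$, $$\sum_{x\in\mathbb Z^d:\,|x|>M\sqrt n}\frac{\mathbf U_{N,\lambda}(n,x)}{U_{N,\lambda}(n)}\le\frac{C}{M^2}.$$
   Context: Setting: $d\in\mathbb N$, $\mathsf c>0$; positive $r(n)=\frac an(1+o(1))$, $R_N=\sum_{n\le N}r(n)$; probability kernels $p(n,\cdot)$ on $\mathbb Z^d$ with (i) $\sum_xx_ip(n,x)=0$ for each $i$, (ii) $\sum_x|x|^2p(n,x)=O(n)$, (iii) $\sup_x|n^{d/2}p(n,x)-g_{\mathsf c}(x/\sqrt n)|=o(1)$ with $g_t(x)=(2\pi t)^{-d/2}e^{-|x|^2/(2t)}$. $(T^{(N)}_i,X^{(N)}_i)$ i.i.d. with law $\frac{r(n)p(n,x)}{R_N}\mathbf1_{\{1,\dots,N\}}(n)$; $\tau^{(N)}_k$, $S^{(N)}_k$ their partial sums. $\mathbf U_{N,\lambda}(n,x):=\sum_{k\ge0}\lambda^k\P(\tau^{(N)}_k=n,S^{(N)}_k=x)$ and $U_{N,\lambda}(n):=\sum_{k\ge0}\lambda^k\P(\tau^{(N)}_k=n)=\sum_x\mathbf U_{N,\lambda}(n,x)$. *)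

(* Defs.v *)
From Stdlib Require Import Reals List ZArith Arith Lra ClassicalEpsilon.
Open Scope R_scope.

Fixpoint lsum {A : Type} (f : A -> R) (L : list A) : R :=
  match L with nil => 0 | a :: L' => f a + lsum f L' end.

Definition fin_sums {A : Type} (P : A -> Prop) (f : A -> R) (s : R) : Prop :=
  exists L : list A, NoDup L /\ Forall P L /\ s = lsum f L.

(** For nonnegative f, "sum_{a : P a} f a = s" means s is the sup of finite partial sums. *)
Definition HasSum {A : Type} (P : A -> Prop) (f : A -> R) (s : R) : Prop :=
  is_lub (fin_sums P f) s.

(** The (nonnegative) series sum_{a : P a} f a  (its value is only meaningful when it
    converges, which is always the case where it is used below). *)
Definition nnsum {A : Type} (P : A -> Prop) (f : A -> R) : R :=
  epsilon (inhabits 0) (fun s => HasSum P f s).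

(** All finite partial sums are bounded by B, i.e. sum_{a : P a} f a <= B for f >= 0. *)
Definition fsum_le {A : Type} (P : A -> Prop) (f : A -> R) (B : R) : Prop :=
  forall L : list A, NoDup L -> Forall P L -> lsum f L <= B.

Definition Zd (d : nat) (x : list Z) : Prop := length x = d.

Definition coord (x : list Z) (i : nat) : R := IZR (nth i x 0%Z).

Fixpoint sqnormR (v : list R) : R :=
  match v with nil => 0 | a :: v' => a ^ 2 + sqnormR v' end.

Definition toR (x : list Z) : list R := map IZR x.

Definition znorm (x : list Z) : R := sqrt (sqnormR (toR x)).

Fixpoint vsub (x y : list Z) : list Z :=
  match x, y with
  | a :: x', b :: y' => (a - b)%Z :: vsub x' y'
  | _, _ => nil
  end.

Definition zerov (d : nat) : list Z := repeat 0%Z d.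

Definition gauss (d : nat) (t : R) (v : list R) : R :=
  / (sqrt (2 * PI * t)) ^ d * exp (- sqnormR v / (2 * t)).

Definition RN (r : nat -> R) (N : nat) : R := lsum r (seq 1 N).

(** Law of (T^(N), X^(N)):  r(m) p(m,y) / R_N * 1_{1..N}(m). *)
Definition law (r : nat -> R) (p : nat -> list Z -> R) (N m : nat) (y : list Z) : R :=
  if ((1 <=? m)%nat && (m <=? N)%nat)%bool then r m * p m y / RN r N else 0.

(** conv k n x = P(tau_k = n, S_k = x)  (k-fold convolution of the law). *)
Fixpoint conv (d : nat) (r : nat -> R) (p : nat -> list Z -> R) (N k n : nat)
  (x : list Z) : R :=
  match k with
  | O => if Nat.eq_dec n 0 then (if list_eq_dec Z.eq_dec x (zerov d) then 1 else 0)
         else 0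
  | S k' => lsum (fun m => nnsum (Zd d)
                    (fun y => law r p N m y * conv d r p N k' (n - m) (vsub x y)))
                 (seq 1 n)
  end.

Definition Ubold (d : nat) (r : nat -> R) (p : nat -> list Z -> R) (N : nat) (lam : R)
  (n : nat) (x : list Z) : R :=
  nnsum (fun _ : nat => True) (fun k => lam ^ k * conv d r p N k n x).

Definition Uscal (d : nat) (r : nat -> R) (p : nat -> list Z -> R) (N : nat) (lam : R)
  (n : nat) : R :=
  nnsum (fun _ : nat => True)
    (fun k => lam ^ k * nnsum (Zd d) (fun x => conv d r p N k n x)).

(* Main.v *)
Require Import Defs.
From Stdlib Require Import Reals List ZArith Arith Lra Lia ClassicalEpsilon Classical.
Open Scope R_scope.


Lemma lsum_app {A} (f : A -> R) L1 L2 : lsum f (L1 ++ L2) = lsum f L1 + lsum f L2.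
Proof. induction L1; simpl; [ring | rewrite IHL1; ring]. Qed.

Lemma lsum_plus {A} (f g : A -> R) L :
  lsum (fun a => f a + g a) L = lsum f L + lsum g L.
Proof. induction L; simpl; [ring | rewrite IHL; ring]. Qed.

Lemma lsum_scal {A} c (f : A -> R) L : lsum (fun a => c * f a) L = c * lsum f L.
Proof. induction L; simpl; [ring | rewrite IHL; ring]. Qed.

Lemma lsum_ext {A} (f g : A -> R) L :
  (forall a, In a L -> f a = g a) -> lsum f L = lsum g L.
Proof.
  induction L; simpl; intros H; [reflexivity|].
  rewrite H by auto. rewrite IHL by auto. reflexivity.
Qed.

Lemma lsum_le {A} (f g : A -> R) L :
  (forall a, In a L -> f a <= g a) -> lsum f L <= lsum g L.
Proof.
  induction L; simpl; intros H; [lra|].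
  assert (f a <= g a) by auto. assert (lsum f L <= lsum g L) by auto. lra.
Qed.

Lemma lsum_nonneg {A} (f : A -> R) L :
  (forall a, In a L -> 0 <= f a) -> 0 <= lsum f L.
Proof.
  induction L; simpl; intros H; [lra|].
  assert (0 <= f a) by auto. assert (0 <= lsum f L) by auto. lra.
Qed.

Lemma lsum_map {A B} (f : B -> R) (g : A -> B) L :
  lsum f (map g L) = lsum (fun a => f (g a)) L.
Proof. induction L; simpl; [reflexivity | rewrite IHL; reflexivity]. Qed.

Lemma lsum_swap {A B} (F : A -> B -> R) L1 L2 :
  lsum (fun a => lsum (F a) L2) L1 = lsum (fun b => lsum (fun a => F a b) L1) L2.
Proof.
  induction L1; simpl.
  - induction L2; simpl; [reflexivity | rewrite <- IHL2; ring].
  - rewrite IHL1. rewrite <- lsum_plus. reflexivity.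
Qed.

Lemma lsum_remove_le {A} (dec : forall x y : A, {x = y} + {x <> y}) (f : A -> R) a L :
  (forall b, In b L -> 0 <= f b) -> lsum f (remove dec a L) <= lsum f L.
Proof.
  induction L; simpl; intros H; [lra|].
  destruct (dec a a0); simpl.
  - assert (0 <= f a0) by auto. assert (lsum f (remove dec a L) <= lsum f L) by auto. lra.
  - assert (lsum f (remove dec a L) <= lsum f L) by auto. lra.
Qed.

Lemma lsum_remove {A} (dec : forall x y : A, {x = y} + {x <> y}) (f : A -> R) a L :
  In a L -> (forall b, In b L -> 0 <= f b) -> f a + lsum f (remove dec a L) <= lsum f L.
Proof.
  induction L; simpl; intros Hin H; [contradiction|].
  destruct (dec a a0) as [e|ne]; simpl.
  - subst. assert (lsum f (remove dec a0 L) <= lsum f L) by (apply lsum_remove_le; auto). lra.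
  - destruct Hin as [e|Hin]; [congruence|].
    assert (f a + lsum f (remove dec a L) <= lsum f L) by auto. lra.
Qed.

Lemma lsum_incl {A} (dec : forall x y : A, {x = y} + {x <> y}) (f : A -> R) L1 L2 :
  NoDup L1 -> incl L1 L2 -> (forall b, In b L2 -> 0 <= f b) -> lsum f L1 <= lsum f L2.
Proof.
  revert L2; induction L1 as [|a L1 IH]; simpl; intros L2 Hnd Hinc H.
  - apply lsum_nonneg; auto.
  - apply NoDup_cons_iff in Hnd as [Ha Hnd].
    assert (lsum f L1 <= lsum f (remove dec a L2)).
    { apply IH; auto.
      - intros b Hb. apply in_in_remove; [intro; subst; contradiction|]. apply Hinc; simpl; auto.
      - intros b Hb. apply in_remove in Hb. apply H; tauto. }
    assert (f a + lsum f (remove dec a L2) <= lsum f L2).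
    { apply lsum_remove; auto. apply Hinc; simpl; auto. }
    lra.
Qed.

Lemma NoDup_map_inj {A B} (g : A -> B) L :
  (forall x y, In x L -> In y L -> g x = g y -> x = y) -> NoDup L -> NoDup (map g L).
Proof.
  induction L as [|a L IH]; simpl; intros Hi Hnd; [constructor|].
  apply NoDup_cons_iff in Hnd as [Ha Hnd]. constructor.
  - intro Hm. apply in_map_iff in Hm as [b [Hb Hb2]].
    assert (b = a) by (apply Hi; auto). subst; contradiction.
  - apply IH; auto.
Qed.

Lemma HS_le {A} (P : A -> Prop) f s L :
  HasSum P f s -> NoDup L -> Forall P L -> lsum f L <= s.
Proof. intros [Hu _] Hn Hf. apply Hu. exists L; auto. Qed.

Lemma HS_lub {A} (P : A -> Prop) f s B : HasSum P f s -> fsum_le P f B -> s <= B.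
Proof.
  intros [_ Hl] Hb. apply Hl. intros x [L [Hn [Hf ->]]]. apply Hb; auto.
Qed.

Lemma HS_unique {A} (P : A -> Prop) f s t : HasSum P f s -> HasSum P f t -> s = t.
Proof.
  intros H1 H2. apply Rle_antisym.
  - apply (HS_lub P f s t H1). intros L Hn Hf. eapply HS_le; eauto.
  - apply (HS_lub P f t s H2). intros L Hn Hf. eapply HS_le; eauto.
Qed.

Lemma HS_exists {A} (P : A -> Prop) f B : fsum_le P f B -> exists s, HasSum P f s.
Proof.
  intros Hb. destruct (completeness (fin_sums P f)) as [m Hm].
  - exists B. intros x [L [Hn [Hf ->]]]. apply Hb; auto.
  - exists 0. exists nil. repeat split; constructor.
  - exists m. exact Hm.
Qed.

Lemma HS_nnsum {A} (P : A -> Prop) f s : HasSum P f s -> nnsum P f = s.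
Proof.
  intros H. unfold nnsum.
  assert (He : exists s, HasSum P f s) by eauto.
  pose proof (epsilon_spec (inhabits 0) (fun s => HasSum P f s) He) as H2.
  eapply HS_unique; eauto.
Qed.

Lemma HS_nnsum_ex {A} (P : A -> Prop) f : (exists s, HasSum P f s) -> HasSum P f (nnsum P f).
Proof. intros [s Hs]. rewrite (HS_nnsum P f s Hs). exact Hs. Qed.

Lemma HS_nonneg {A} (P : A -> Prop) f s : HasSum P f s -> 0 <= s.
Proof. intros H. apply (HS_le P f s nil H); constructor. Qed.

Lemma HS_ext {A} (P : A -> Prop) f g s :
  (forall a, P a -> f a = g a) -> HasSum P f s -> HasSum P g s.
Proof.
  intros He [Hu Hl].
  assert (Hs : forall L, Forall P L -> lsum f L = lsum g L).
  { intros L HF. apply lsum_ext. intros a Ha. apply He. rewrite Forall_forall in HF; auto. }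
  split.
  - intros x [L [Hn [Hf ->]]]. rewrite <- Hs by auto. apply Hu. exists L; auto.
  - intros b Hb. apply Hl. intros x [L [Hn [Hf ->]]]. rewrite Hs by auto. apply Hb. exists L; auto.
Qed.

Lemma HS_zero {A} (P : A -> Prop) : HasSum P (fun _ => 0) 0.
Proof.
  split.
  - intros x [L [Hn [Hf ->]]]. induction L; simpl; [lra|]. inversion Hn; inversion Hf; subst.
    assert (lsum (fun _ : A => 0) L <= 0) by auto. lra.
  - intros b Hb. apply Hb. exists nil. repeat split; constructor.
Qed.

Lemma HS_scal {A} (P : A -> Prop) c f s :
  0 <= c -> HasSum P f s -> HasSum P (fun a => c * f a) (c * s).
Proof.
  intros Hc H. split.
  - intros x [L [Hn [Hf ->]]]. rewrite lsum_scal.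
    apply Rmult_le_compat_l; auto. eapply HS_le; eauto.
  - intros b Hb. destruct (Req_dec c 0) as [e|ne].
    + subst. rewrite Rmult_0_l. apply Hb. exists nil. simpl. repeat split; try constructor; ring.
    + assert (s <= b / c).
      { apply (HS_lub P f s); auto. intros L Hn Hf.
        assert (c * lsum f L <= b).
        { rewrite <- lsum_scal. apply Hb. exists L; auto. }
        apply (Rmult_le_reg_l c); [lra|]. field_simplify; lra. }
      apply (Rmult_le_compat_l c) in H0; [|lra].
      replace (c * (b / c)) with b in H0 by (field; lra). lra.
Qed.

Lemma HS_approx {A} (P : A -> Prop) f s eps :
  HasSum P f s -> 0 < eps -> exists L, NoDup L /\ Forall P L /\ s - eps < lsum f L.
Proof.
  intros H He. apply NNPP. intro Hn.
  assert (s <= s - eps).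
  { apply (HS_lub P f s); auto. intros L Hd Hf.
    apply Rnot_lt_le. intro Hl. apply Hn. exists L; auto. }
  lra.
Qed.

Lemma le_eps (x y : R) : (forall eps, 0 < eps -> x <= y + eps) -> x <= y.
Proof.
  intros H. apply Rnot_lt_le. intro Hl.
  specialize (H ((x - y) / 2)). assert (0 < (x-y)/2) by lra. specialize (H H0). lra.
Qed.

Definition nng {A} (P : A -> Prop) (f : A -> R) := forall a, P a -> 0 <= f a.

Lemma HS_plus {A} (dec : forall x y : A, {x = y} + {x <> y}) (P : A -> Prop) f g s t :
  nng P f -> nng P g -> HasSum P f s -> HasSum P g t ->
  HasSum P (fun a => f a + g a) (s + t).
Proof.
  intros Hf Hg H1 H2. split.
  - intros x [L [Hn [HF ->]]]. rewrite lsum_plus.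
    assert (lsum f L <= s) by (eapply HS_le; eauto).
    assert (lsum g L <= t) by (eapply HS_le; eauto). lra.
  - intros b Hb. apply le_eps. intros eps He.
    destruct (HS_approx P f s (eps/2) H1) as [L1 [N1 [F1 E1]]]; [lra|].
    destruct (HS_approx P g t (eps/2) H2) as [L2 [N2 [F2 E2]]]; [lra|].
    set (L := nodup dec (L1 ++ L2)).
    assert (FL : Forall P L).
    { apply Forall_forall. intros x Hx. apply nodup_In in Hx. apply in_app_or in Hx.
      rewrite Forall_forall in F1, F2. destruct Hx; auto. }
    assert (NL : NoDup L) by apply NoDup_nodup.
    assert (nn : forall (h : A -> R), nng P h -> forall x, In x L -> 0 <= h x).
    { intros h Hh x Hx. apply Hh. rewrite Forall_forall in FL; auto. }
    assert (lsum f L1 <= lsum f L).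
    { apply (lsum_incl dec); auto. intros x Hx. apply nodup_In. apply in_or_app; auto. }
    assert (lsum g L2 <= lsum g L).
    { apply (lsum_incl dec); auto. intros x Hx. apply nodup_In. apply in_or_app; auto. }
    assert (lsum (fun a => f a + g a) L <= b) by (apply Hb; exists L; auto).
    rewrite lsum_plus in H3. lra.
Qed.

Lemma HS_lsum {A I} (dec : forall x y : A, {x = y} + {x <> y}) (P : A -> Prop) (F : I -> A -> R) (h : I -> R) Li :
  (forall i, In i Li -> nng P (F i)) ->
  (forall i, In i Li -> HasSum P (F i) (h i)) ->
  HasSum P (fun a => lsum (fun i => F i a) Li) (lsum h Li).
Proof.
  induction Li as [|i Li IH]; simpl; intros Hn Hs.
  - apply HS_zero.
  - apply (HS_plus dec); auto.
    intros a Ha. apply lsum_nonneg. intros j Hj. apply Hn; auto.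
Qed.

Lemma HS_mono {A} (P : A -> Prop) f g s t :
  (forall a, P a -> f a <= g a) -> HasSum P f s -> HasSum P g t -> s <= t.
Proof.
  intros Hle H1 H2. apply (HS_lub P f s); auto. intros L Hn Hf.
  apply Rle_trans with (lsum g L).
  - apply lsum_le. intros a Ha. apply Hle. rewrite Forall_forall in Hf; auto.
  - eapply HS_le; eauto.
Qed.

Lemma HS_dom {A} (P : A -> Prop) f g t :
  (forall a, P a -> f a <= g a) -> HasSum P g t -> HasSum P f (nnsum P f) /\ nnsum P f <= t.
Proof.
  intros Hle H. assert (He : exists s, HasSum P f s).
  { apply (HS_exists P f t). intros L Hn Hf.
    apply Rle_trans with (lsum g L).
    - apply lsum_le. intros a Ha. apply Hle. rewrite Forall_forall in Hf; auto.
    - eapply HS_le; eauto. }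
  pose proof (HS_nnsum_ex P f He). split; auto. eapply HS_mono; eauto.
Qed.

Lemma HS_reindex {A B} (P : A -> Prop) (Q : B -> Prop) (phi : B -> A) (psi : A -> B) f s :
  (forall b, Q b -> P (phi b)) -> (forall a, P a -> Q (psi a)) ->
  (forall b, Q b -> psi (phi b) = b) -> (forall a, P a -> phi (psi a) = a) ->
  HasSum P f s -> HasSum Q (fun b => f (phi b)) s.
Proof.
  intros H1 H2 H3 H4 Hs. split.
  - intros x [L [Hn [Hf ->]]]. rewrite Forall_forall in Hf. rewrite <- lsum_map.
    eapply HS_le; eauto.
    + apply NoDup_map_inj; auto. intros x y Hx Hy E.
      rewrite <- (H3 x), <- (H3 y); auto. rewrite E; reflexivity.
    + apply Forall_forall. intros a Ha. apply in_map_iff in Ha as [b [<- Hb]]. auto.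
  - intros b Hb. apply (HS_lub P f s); auto. intros L Hn Hf. rewrite Forall_forall in Hf.
    assert (E : lsum f L = lsum (fun b => f (phi b)) (map psi L)).
    { rewrite lsum_map. apply lsum_ext. intros a Ha. rewrite H4; auto. }
    rewrite E. apply Hb. exists (map psi L). repeat split.
    + apply NoDup_map_inj; auto. intros x y Hx Hy E2.
      rewrite <- (H4 x), <- (H4 y); auto. rewrite E2; reflexivity.
    + apply Forall_forall. intros a Ha. apply in_map_iff in Ha as [b' [<- Hb']]. auto.
Qed.

Lemma HS_tonelli {A B} (decA : forall x y : A, {x = y} + {x <> y})
  (decB : forall x y : B, {x = y} + {x <> y})
  (PA : A -> Prop) (PB : B -> Prop) (F : A -> B -> R) h S g :
  (forall x y, PA x -> PB y -> 0 <= F x y) ->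
  (forall y, PB y -> HasSum PA (fun x => F x y) (h y)) ->
  HasSum PB h S ->
  (forall x, PA x -> HasSum PB (F x) (g x)) ->
  HasSum PA g S.
Proof.
  intros Hn Hh HS Hg. split.
  - intros v [Lx [Hnd [Hf ->]]]. rewrite Forall_forall in Hf.
    assert (H1 : HasSum PB (fun y => lsum (fun x => F x y) Lx) (lsum g Lx)).
    { apply (HS_lsum decB); auto. intros x Hx y Hy. auto. }
    eapply HS_mono; [|exact H1|exact HS].
    intros y Hy. eapply HS_le; eauto. apply Forall_forall; auto.
  - intros B0 HB0. apply (HS_lub PB h S); auto. intros Ly Hnd Hf. rewrite Forall_forall in Hf.
    assert (H1 : HasSum PA (fun x => lsum (fun y => F x y) Ly) (lsum h Ly)).
    { apply (HS_lsum decA (I:=B) PA (fun y x => F x y)); auto. intros y Hy x Hx. auto. }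
    apply (HS_lub PA _ _ B0 H1). intros Lx Hnx Hfx. rewrite Forall_forall in Hfx.
    apply Rle_trans with (lsum g Lx).
    + apply lsum_le. intros x Hx. eapply HS_le; eauto. apply Forall_forall; auto.
    + apply HB0. exists Lx; repeat split; auto. apply Forall_forall; auto.
Qed.

Fixpoint vadd (x y : list Z) : list Z :=
  match x, y with
  | a :: x', b :: y' => (a + b)%Z :: vadd x' y'
  | _, _ => nil
  end.

Definition zn2 (x : list Z) : R := sqnormR (toR x).
Definition ppos (u : R) : R := Rmax u 0.
Definition pneg (u : R) : R := Rmax (- u) 0.

Lemma ppos_nonneg u : 0 <= ppos u. Proof. unfold ppos. apply Rmax_r. Qed.
Lemma pneg_nonneg u : 0 <= pneg u. Proof. unfold pneg. apply Rmax_r. Qed.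

Lemma len_vsub x y : length (vsub x y) = Nat.min (length x) (length y).
Proof. revert y; induction x; destruct y; simpl; auto. Qed.
Lemma len_vadd x y : length (vadd x y) = Nat.min (length x) (length y).
Proof. revert y; induction x; destruct y; simpl; auto. Qed.

Lemma vsub_vadd z y : length z = length y -> vsub (vadd z y) y = z.
Proof.
  revert y; induction z; destruct y; simpl; intros H; try discriminate; auto.
  f_equal; [lia | auto].
Qed.
Lemma vadd_vsub x y : length x = length y -> vadd (vsub x y) y = x.
Proof.
  revert y; induction x; destruct y; simpl; intros H; try discriminate; auto.
  f_equal; [lia | auto].
Qed.

Lemma zn2_cons a x : zn2 (a :: x) = IZR a ^ 2 + zn2 x.
Proof. reflexivity. Qed.
Lemma zn2_nil : zn2 nil = 0. Proof. reflexivity. Qed.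

Lemma zn2_nonneg x : 0 <= zn2 x.
Proof. induction x; [rewrite zn2_nil; lra | rewrite zn2_cons; nra]. Qed.

Lemma coord_sq_le x i : coord x i ^ 2 <= zn2 x.
Proof.
  revert i; induction x; intros i; unfold coord; destruct i; simpl nth.
  - rewrite zn2_nil; simpl; lra.
  - rewrite zn2_nil; simpl; lra.
  - rewrite zn2_cons. pose proof (zn2_nonneg x). lra.
  - rewrite zn2_cons. specialize (IHx i). unfold coord in IHx. nra.
Qed.

Lemma zn2_vadd_le z y : zn2 (vadd z y) <= 2 * (zn2 z + zn2 y).
Proof.
  revert y; induction z; destruct y; simpl vadd.
  - rewrite zn2_nil; lra.
  - pose proof (zn2_nonneg (z :: y)). rewrite zn2_nil; lra.
  - pose proof (zn2_nonneg (a :: z)). rewrite zn2_nil; lra.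
  - rewrite !zn2_cons, plus_IZR. specialize (IHz y). pose proof (pow2_ge_0 (IZR a - IZR z0)). nra.
Qed.

Lemma zn2_coord x : zn2 x = lsum (fun i => coord x i ^ 2) (seq 0 (length x)).
Proof.
  induction x; [reflexivity|].
  rewrite zn2_cons. simpl length. rewrite <- cons_seq. simpl lsum.
  rewrite <- seq_shift, lsum_map. rewrite IHx. reflexivity.
Qed.

Lemma coord_vadd z y i : length z = length y -> coord (vadd z y) i = coord z i + coord y i.
Proof.
  revert y i; induction z; destruct y; simpl; intros i H; try discriminate.
  - unfold coord; destruct i; simpl; lra.
  - unfold coord in *; destruct i; simpl.
    + apply plus_IZR.
    + apply IHz. lia.
Qed.

Lemma key_real u v :
  (u + v) ^ 2 + 2 * (pneg v * ppos u + ppos v * pneg u)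
  = u ^ 2 + v ^ 2 + 2 * (ppos v * ppos u + pneg v * pneg u).
Proof.
  unfold ppos, pneg.
  destruct (Rle_or_lt 0 u); destruct (Rle_or_lt 0 v).
  - rewrite (Rmax_left u), (Rmax_right (-u)), (Rmax_left v), (Rmax_right (-v)) by lra. ring.
  - rewrite (Rmax_left u), (Rmax_right (-u)), (Rmax_right v), (Rmax_left (-v)) by lra. ring.
  - rewrite (Rmax_right u), (Rmax_left (-u)), (Rmax_left v), (Rmax_right (-v)) by lra. ring.
  - rewrite (Rmax_right u), (Rmax_left (-u)), (Rmax_right v), (Rmax_left (-v)) by lra. ring.
Qed.

Definition X1 d (y z : list Z) : R :=
  lsum (fun i => 2 * (pneg (coord y i) * ppos (coord z i) + ppos (coord y i) * pneg (coord z i))) (seq 0 d).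
Definition X2 d (y z : list Z) : R :=
  lsum (fun i => 2 * (ppos (coord y i) * ppos (coord z i) + pneg (coord y i) * pneg (coord z i))) (seq 0 d).

Lemma key_identity d y z : length z = d -> length y = d ->
  zn2 (vadd z y) + X1 d y z = zn2 z + zn2 y + X2 d y z.
Proof.
  intros Hz Hy.
  assert (Hl : length (vadd z y) = d) by (rewrite len_vadd; lia).
  rewrite (zn2_coord (vadd z y)), (zn2_coord z), (zn2_coord y), Hl, Hz, Hy.
  unfold X1, X2. rewrite <- !lsum_plus. apply lsum_ext. intros i _.
  rewrite coord_vadd by lia. apply key_real.
Qed.

Lemma X_nonneg1 d y z : 0 <= X1 d y z.
Proof.
  apply lsum_nonneg. intros. pose proof (ppos_nonneg (coord y a)). pose proof (pneg_nonneg (coord y a)).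
  pose proof (ppos_nonneg (coord z a)). pose proof (pneg_nonneg (coord z a)). nra.
Qed.
Lemma X_nonneg2 d y z : 0 <= X2 d y z.
Proof.
  apply lsum_nonneg. intros. pose proof (ppos_nonneg (coord y a)). pose proof (pneg_nonneg (coord y a)).
  pose proof (ppos_nonneg (coord z a)). pose proof (pneg_nonneg (coord z a)). nra.
Qed.

Lemma znorm_sq x : znorm x ^ 2 = zn2 x.
Proof. unfold znorm. rewrite pow2_sqrt; [reflexivity | apply zn2_nonneg]. Qed.

Lemma zn2_zerov d : zn2 (zerov d) = 0.
Proof. induction d; [reflexivity|]. change (zerov (S d)) with (0%Z :: zerov d). rewrite zn2_cons, IHd. simpl; ring. Qed.

Lemma zerov_len d : length (zerov d) = d.
Proof. apply repeat_length. Qed.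

Lemma ppos_le u : ppos u <= 1 + u ^ 2.
Proof. unfold ppos. destruct (Rle_or_lt 0 u); [rewrite Rmax_left by lra; nra | rewrite Rmax_right by lra; nra]. Qed.
Lemma pneg_le u : pneg u <= 1 + u ^ 2.
Proof. unfold pneg. destruct (Rle_or_lt 0 u); [rewrite Rmax_right by lra; nra | rewrite Rmax_left by lra; nra]. Qed.

Definition decZ : forall x y : list Z, {x = y} + {x <> y} := list_eq_dec Z.eq_dec.

Lemma A_vsub d x y : Zd d x -> Zd d y -> Zd d (vsub x y).
Proof. unfold Zd; intros; rewrite len_vsub; lia. Qed.
Lemma A_vadd d x y : Zd d x -> Zd d y -> Zd d (vadd x y).
Proof. unfold Zd; intros; rewrite len_vadd; lia. Qed.

Lemma HS_shift d f s y : Zd d y -> HasSum (Zd d) f s -> HasSum (Zd d) (fun x => f (vsub x y)) s.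
Proof.
  intros Hy Hs. apply (HS_reindex (Zd d) (Zd d) (fun x => vsub x y) (fun z => vadd z y)); auto.
  - intros; apply A_vsub; auto.
  - intros; apply A_vadd; auto.
  - intros b Hb. apply vadd_vsub. unfold Zd in *; lia.
  - intros a Ha. apply vsub_vadd. unfold Zd in *; lia.
Qed.

Lemma HS_pt {A} (P : A -> Prop) f s a : nng P f -> HasSum P f s -> P a -> f a <= s.
Proof.
  intros Hn Hs Ha. replace (f a) with (lsum f (a :: nil)) by (simpl; ring).
  eapply HS_le; eauto. constructor; [simpl; tauto | constructor].
Qed.

Lemma HS_lin_coords d (f : list Z -> R) (a b Fp Fn : nat -> R) :
  nng (Zd d) f -> (forall i, 0 <= a i) -> (forall i, 0 <= b i) ->
  (forall i, (i < d)%nat -> HasSum (Zd d) (fun z => f z * ppos (coord z i)) (Fp i)) ->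
  (forall i, (i < d)%nat -> HasSum (Zd d) (fun z => f z * pneg (coord z i)) (Fn i)) ->
  HasSum (Zd d)
    (fun z => f z * lsum (fun i => 2 * (a i * ppos (coord z i) + b i * pneg (coord z i))) (seq 0 d))
    (lsum (fun i => 2 * (a i * Fp i + b i * Fn i)) (seq 0 d)).
Proof.
  intros Hf Ha Hb HP HN.
  eapply HS_ext; [|apply (HS_lsum decZ (Zd d)
     (fun i z => f z * (2 * (a i * ppos (coord z i) + b i * pneg (coord z i)))))].
  - intros z Hz. simpl. rewrite <- lsum_scal. reflexivity.
  - intros i _ z Hz. pose proof (Hf z Hz). pose proof (Ha i). pose proof (Hb i).
    pose proof (ppos_nonneg (coord z i)). pose proof (pneg_nonneg (coord z i)).
    apply Rmult_le_pos; auto. apply Rmult_le_pos; [lra|].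
    apply Rplus_le_le_0_compat; apply Rmult_le_pos; auto.
  - intros i Hi. apply in_seq in Hi. assert (Hi' : (i < d)%nat) by lia.
    replace (2 * (a i * Fp i + b i * Fn i)) with ((2 * a i) * Fp i + (2 * b i) * Fn i) by ring.
    eapply HS_ext; [|apply (HS_plus decZ); [| |apply HS_scal; [|apply HP; auto]|apply HS_scal; [|apply HN; auto]]].
    + intros z Hz. simpl. ring.
    + intros z Hz. pose proof (Hf z Hz). pose proof (Ha i). pose proof (ppos_nonneg (coord z i)).
      apply Rmult_le_pos; [lra|]. apply Rmult_le_pos; auto.
    + intros z Hz. pose proof (Hf z Hz). pose proof (Hb i). pose proof (pneg_nonneg (coord z i)).
      apply Rmult_le_pos; [lra|]. apply Rmult_le_pos; auto.
    + pose proof (Ha i); lra.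
    + pose proof (Hb i); lra.
Qed.

Lemma HS_first_moment d (c' : list Z -> R) mu' q' i :
  nng (Zd d) c' -> HasSum (Zd d) c' mu' -> HasSum (Zd d) (fun z => zn2 z * c' z) q' ->
  HasSum (Zd d) (fun z => c' z * ppos (coord z i)) (nnsum (Zd d) (fun z => c' z * ppos (coord z i))) /\
  HasSum (Zd d) (fun z => c' z * pneg (coord z i)) (nnsum (Zd d) (fun z => c' z * pneg (coord z i))).
Proof.
  intros Hn H1 H2.
  assert (H3 : HasSum (Zd d) (fun z => c' z + zn2 z * c' z) (mu' + q')).
  { apply (HS_plus decZ); auto. intros z Hz. pose proof (Hn z Hz). pose proof (zn2_nonneg z). nra. }
  split; apply (HS_dom (Zd d) _ (fun z => c' z + zn2 z * c' z) (mu' + q')); auto;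
   intros z Hz; pose proof (Hn z Hz); pose proof (coord_sq_le z i).
  - pose proof (ppos_le (coord z i)). nra.
  - pose proof (pneg_le (coord z i)). nra.
Qed.

Ltac pos_tac := repeat (apply Rplus_le_le_0_compat || apply Rmult_le_pos); auto; try lra.

Lemma core_a d (l c' : list Z -> R) wm mu' x :
  nng (Zd d) l -> nng (Zd d) c' -> HasSum (Zd d) l wm -> HasSum (Zd d) c' mu' -> Zd d x ->
  HasSum (Zd d) (fun y => l y * c' (vsub x y)) (nnsum (Zd d) (fun y => l y * c' (vsub x y))).
Proof.
  intros Hl Hc Hw Hm Hx.
  assert (0 <= mu') by (eapply HS_nonneg; eauto).
  eapply (HS_dom (Zd d) _ (fun y => mu' * l y) (mu' * wm)).
  - intros y Hy. pose proof (Hl y Hy). pose proof (HS_pt _ _ _ (vsub x y) Hc Hm (A_vsub d x y Hx Hy)). nra.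
  - apply HS_scal; auto.
Qed.

Lemma core_b d (l c' : list Z -> R) wm mu' :
  nng (Zd d) l -> nng (Zd d) c' -> HasSum (Zd d) l wm -> HasSum (Zd d) c' mu' ->
  HasSum (Zd d) (fun x => nnsum (Zd d) (fun y => l y * c' (vsub x y))) (wm * mu').
Proof.
  intros Hl Hc Hw Hm.
  assert (0 <= mu') by (eapply HS_nonneg; eauto).
  apply (HS_tonelli decZ decZ (Zd d) (Zd d) (fun x y => l y * c' (vsub x y)) (fun y => l y * mu')).
  - intros x y Hx Hy. pose proof (Hl y Hy). pose proof (Hc _ (A_vsub d x y Hx Hy)). nra.
  - intros y Hy. apply HS_scal; [auto|]. apply HS_shift; auto.
  - replace (wm * mu') with (mu' * wm) by ring. eapply HS_ext; [|apply (HS_scal _ mu'); eauto]. intros; simpl; ring.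
  - intros x Hx. eapply core_a; eauto.
Qed.

Lemma core_c d (l c' : list Z -> R) wm Vm (Sm : nat -> R) mu' q' :
  nng (Zd d) l -> nng (Zd d) c' -> HasSum (Zd d) l wm ->
  HasSum (Zd d) (fun y => l y * zn2 y) Vm ->
  (forall i, (i < d)%nat -> HasSum (Zd d) (fun y => l y * ppos (coord y i)) (Sm i)) ->
  (forall i, (i < d)%nat -> HasSum (Zd d) (fun y => l y * pneg (coord y i)) (Sm i)) ->
  HasSum (Zd d) c' mu' -> HasSum (Zd d) (fun z => zn2 z * c' z) q' ->
  HasSum (Zd d) (fun x => zn2 x * nnsum (Zd d) (fun y => l y * c' (vsub x y))) (wm * q' + mu' * Vm).
Proof.
  intros Hl Hc Hw HV HSp HSn Hm Hq.
  assert (Hmu : 0 <= mu') by (eapply HS_nonneg; eauto).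
  assert (Hq0 : 0 <= q') by (eapply HS_nonneg; eauto).
  set (Pp := fun i => nnsum (Zd d) (fun z => c' z * ppos (coord z i))).
  set (Pn := fun i => nnsum (Zd d) (fun z => c' z * pneg (coord z i))).
  assert (HPp : forall i, HasSum (Zd d) (fun z => c' z * ppos (coord z i)) (Pp i)).
  { intros i. apply (HS_first_moment d c' mu' q' i); auto. }
  assert (HPn : forall i, HasSum (Zd d) (fun z => c' z * pneg (coord z i)) (Pn i)).
  { intros i. apply (HS_first_moment d c' mu' q' i); auto. }
  assert (Pp0 : forall i, 0 <= Pp i) by (intros; eapply HS_nonneg; eauto).
  assert (Pn0 : forall i, 0 <= Pn i) by (intros; eapply HS_nonneg; eauto).
  set (T := fun y => nnsum (Zd d) (fun z => zn2 (vadd z y) * c' z)).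
  assert (HT : forall y, Zd d y -> HasSum (Zd d) (fun z => zn2 (vadd z y) * c' z) (T y)).
  { intros y Hy. apply (HS_dom (Zd d) _ (fun z => 2 * (zn2 z * c' z) + (2 * zn2 y) * c' z)
      (2 * q' + 2 * zn2 y * mu')).
    - intros z Hz. pose proof (Hc z Hz). pose proof (zn2_vadd_le z y). nra.
    - apply (HS_plus decZ).
      + intros z Hz. pose proof (Hc z Hz). pose proof (zn2_nonneg z). nra.
      + intros z Hz. pose proof (Hc z Hz). pose proof (zn2_nonneg y). nra.
      + apply HS_scal; auto; lra.
      + apply (HS_scal _ (2 * zn2 y)); auto. pose proof (zn2_nonneg y); lra. }
  assert (T0 : forall y, Zd d y -> 0 <= T y) by (intros; eapply HS_nonneg; eauto).
  set (E1 := fun y => lsum (fun i => 2 * (pneg (coord y i) * Pp i + ppos (coord y i) * Pn i)) (seq 0 d)).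
  set (E2 := fun y => lsum (fun i => 2 * (ppos (coord y i) * Pp i + pneg (coord y i) * Pn i)) (seq 0 d)).
  assert (HE1 : forall y, HasSum (Zd d) (fun z => c' z * X1 d y z) (E1 y)).
  { intros y. unfold X1, E1. apply HS_lin_coords; auto; intros; auto using ppos_nonneg, pneg_nonneg. }
  assert (HE2 : forall y, HasSum (Zd d) (fun z => c' z * X2 d y z) (E2 y)).
  { intros y. unfold X2, E2. apply HS_lin_coords; auto; intros; auto using ppos_nonneg, pneg_nonneg. }
  assert (E10 : forall y, 0 <= E1 y) by (intros; eapply HS_nonneg; eauto).
  assert (E20 : forall y, 0 <= E2 y) by (intros; eapply HS_nonneg; eauto).
  assert (Heq : forall y, Zd d y -> T y + E1 y = q' + zn2 y * mu' + E2 y).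
  { intros y Hy. eapply HS_unique.
    - apply (HS_plus decZ); [| |apply HT; auto|apply HE1].
      + intros z Hz. pose proof (Hc z Hz). pose proof (zn2_nonneg (vadd z y)). nra.
      + intros z Hz. pose proof (Hc z Hz). pose proof (X_nonneg1 d y z). nra.
    - eapply HS_ext; [|apply (HS_plus decZ); [| |apply (HS_plus decZ); [| |exact Hq|apply HS_scal; [|exact Hm]]|apply HE2]].
      + intros z Hz. simpl. pose proof (key_identity d y z Hz Hy). 
        transitivity (c' z * (zn2 (vadd z y) + X1 d y z)); [|ring]. rewrite H. ring.
      + intros z Hz. pose proof (Hc z Hz). pose proof (zn2_nonneg z). pose proof (zn2_nonneg y). nra.
      + intros z Hz. pose proof (Hc z Hz). pose proof (X_nonneg2 d y z). nra.
      + intros z Hz. pose proof (Hc z Hz). pose proof (zn2_nonneg z). nra.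
      + intros z Hz. pose proof (Hc z Hz). pose proof (zn2_nonneg y). nra.
      + apply zn2_nonneg. }
  set (E := lsum (fun i => 2 * (Pn i * Sm i + Pp i * Sm i)) (seq 0 d)).
  assert (HE1y : HasSum (Zd d) (fun y => l y * E1 y) E).
  { eapply HS_ext; [|apply (HS_lin_coords d l Pn Pp Sm Sm); auto].
    intros y Hy. unfold E1. f_equal. apply lsum_ext. intros; ring. }
  assert (HE2y : HasSum (Zd d) (fun y => l y * E2 y) E).
  { replace E with (lsum (fun i => 2 * (Pp i * Sm i + Pn i * Sm i)) (seq 0 d))
      by (unfold E; apply lsum_ext; intros; ring).
    eapply HS_ext; [|apply (HS_lin_coords d l Pp Pn Sm Sm); auto].
    intros y Hy. unfold E2. f_equal. apply lsum_ext. intros; ring. }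
  assert (HR : HasSum (Zd d) (fun y => l y * (q' + zn2 y * mu' + E2 y)) (q' * wm + mu' * Vm + E)).
  { eapply HS_ext; [|apply (HS_plus decZ); [| |apply (HS_plus decZ); [| |apply HS_scal; [|exact Hw]|apply HS_scal; [|exact HV]]|exact HE2y]].
    - intros y Hy. simpl. ring.
    - intros y Hy. pose proof (Hl y Hy). pose proof (zn2_nonneg y). pos_tac.
    - intros y Hy. pose proof (Hl y Hy). pose proof (E20 y). pos_tac.
    - intros y Hy. pose proof (Hl y Hy). pos_tac.
    - intros y Hy. pose proof (Hl y Hy). pose proof (zn2_nonneg y). pos_tac.
    - auto.
    - auto. }
  assert (HS2 : HasSum (Zd d) (fun y => l y * T y) (nnsum (Zd d) (fun y => l y * T y))).
  { eapply HS_dom; [|exact HR]. intros y Hy. pose proof (Hl y Hy). pose proof (Heq y Hy).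
    pose proof (E10 y). nra. }
  assert (HS2v : nnsum (Zd d) (fun y => l y * T y) = wm * q' + mu' * Vm).
  { assert (nnsum (Zd d) (fun y => l y * T y) + E = q' * wm + mu' * Vm + E); [|lra].
    eapply HS_unique; [|exact HR].
    eapply HS_ext; [|apply (HS_plus decZ); [| |exact HS2|exact HE1y]].
    - intros y Hy. simpl. rewrite <- Heq by auto. ring.
    - intros y Hy. pose proof (Hl y Hy). pose proof (T0 y Hy). nra.
    - intros y Hy. pose proof (Hl y Hy). pose proof (E10 y). nra. }
  rewrite <- HS2v.
  apply (HS_tonelli decZ decZ (Zd d) (Zd d) (fun x y => zn2 x * (l y * c' (vsub x y))) (fun y => l y * T y)).
  - intros x y Hx Hy. pose proof (Hl y Hy). pose proof (Hc _ (A_vsub d x y Hx Hy)).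
    pose proof (zn2_nonneg x). apply Rmult_le_pos; auto. nra.
  - intros y Hy. eapply HS_ext; [|apply HS_scal; [|apply (HS_shift d _ _ y Hy (HT y Hy))]].
    + intros x Hx. simpl. rewrite vadd_vsub by (unfold Zd in *; lia). ring.
    + auto.
  - exact HS2.
  - intros x Hx. apply HS_scal; [apply zn2_nonneg|]. eapply core_a; eauto.
Qed.

Definition wt (r : nat -> R) (N m : nat) : R :=
  if ((1 <=? m)%nat && (m <=? N)%nat)%bool then r m / RN r N else 0.

Lemma law_wt r p N m y : law r p N m y = wt r N m * p m y.
Proof. unfold law, wt. destruct (_ && _)%bool; unfold Rdiv; ring. Qed.

Lemma HS_self {A} (P : A -> Prop) f s : HasSum P f s -> HasSum P f (nnsum P f).
Proof. intros H. rewrite (HS_nnsum P f s H). exact H. Qed.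

Lemma ind_notin (a : list Z) L : ~ In a L -> lsum (fun x => if decZ x a then 1 else 0) L = 0.
Proof.
  induction L; simpl; intros H; [reflexivity|].
  destruct (decZ a0 a); [subst; tauto|]. rewrite IHL by tauto. ring.
Qed.

Lemma ind_le (a : list Z) L : NoDup L -> lsum (fun x => if decZ x a then 1 else 0) L <= 1.
Proof.
  induction L; simpl; intros H; [lra|]. apply NoDup_cons_iff in H as [H1 H2].
  destruct (decZ a0 a).
  - subst. rewrite ind_notin by auto. lra.
  - specialize (IHL H2). lra.
Qed.

Lemma HS_ind d a : Zd d a -> HasSum (Zd d) (fun x => if decZ x a then 1 else 0) 1.
Proof.
  intros Ha. split.
  - intros v [L [Hn [Hf ->]]]. apply ind_le; auto.
  - intros b Hb. apply Hb. exists (a :: nil). split; [constructor; [simpl; tauto|constructor]|].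
    split; [constructor; auto|]. simpl. destruct (decZ a a); [ring|congruence].
Qed.

Lemma conv_S d r p N k n x :
  conv d r p N (S k) n x =
  lsum (fun m => nnsum (Zd d) (fun y => law r p N m y * conv d r p N k (n - m) (vsub x y))) (seq 1 n).
Proof. reflexivity. Qed.

Definition MU d r p N k n := nnsum (Zd d) (conv d r p N k n).
Definition QQ d r p N k n := nnsum (Zd d) (fun x => zn2 x * conv d r p N k n x).

Lemma conv_inv d r p N (K : R) (V : nat -> R) (Sm : nat -> nat -> R) :
  0 <= K ->
  (forall m, (1 <= m)%nat -> nng (Zd d) (law r p N m)) ->
  (forall m, (1 <= m)%nat -> HasSum (Zd d) (law r p N m) (wt r N m)) ->
  (forall m, (1 <= m)%nat -> HasSum (Zd d) (fun y => law r p N m y * zn2 y) (V m) /\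
                           V m <= wt r N m * (K * INR m)) ->
  (forall m i, (1 <= m)%nat -> (i < d)%nat ->
     HasSum (Zd d) (fun y => law r p N m y * ppos (coord y i)) (Sm m i)) ->
  (forall m i, (1 <= m)%nat -> (i < d)%nat ->
     HasSum (Zd d) (fun y => law r p N m y * pneg (coord y i)) (Sm m i)) ->
  forall k n, nng (Zd d) (conv d r p N k n) /\
    HasSum (Zd d) (conv d r p N k n) (MU d r p N k n) /\
    HasSum (Zd d) (fun x => zn2 x * conv d r p N k n x) (QQ d r p N k n) /\
    QQ d r p N k n <= K * INR n * MU d r p N k n.
Proof.
  intros HK Hl0 Hl1 HV HSp HSn k. induction k as [|k IH]; intros n.
  - simpl conv. unfold MU, QQ. simpl conv. destruct (Nat.eq_dec n 0) as [e|ne].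
    + subst n.
      assert (H1 : HasSum (Zd d) (fun x => if list_eq_dec Z.eq_dec x (zerov d) then 1 else 0) 1)
        by (apply HS_ind; apply zerov_len).
      assert (H2 : HasSum (Zd d) (fun x => zn2 x * (if list_eq_dec Z.eq_dec x (zerov d) then 1 else 0)) 0).
      { eapply HS_ext; [|apply HS_zero]. intros x Hx. simpl.
        destruct (list_eq_dec Z.eq_dec x (zerov d)); [subst; rewrite zn2_zerov|]; ring. }
      rewrite (HS_nnsum _ _ _ H1), (HS_nnsum _ _ _ H2). split; [|split; [exact H1|split; [exact H2|]]].
      * intros x _. destruct (list_eq_dec Z.eq_dec x (zerov d)); lra.
      * simpl INR. lra.
    + assert (H1 : HasSum (Zd d) (fun _ : list Z => 0) 0) by apply HS_zero.
      assert (H2 : HasSum (Zd d) (fun x : list Z => zn2 x * 0) 0).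
      { eapply HS_ext; [|apply HS_zero]. intros; cbv beta; ring. }
      rewrite (HS_nnsum _ _ _ H1), (HS_nnsum _ _ _ H2). split; [|split; [exact H1|split; [exact H2|]]].
      * intros x _. lra.
      * lra.
  - assert (Hm : forall m, In m (seq 1 n) -> (1 <= m)%nat /\ (m <= n)%nat)
      by (intros m Hm; apply in_seq in Hm; lia).
    assert (Ha : forall m x, In m (seq 1 n) -> Zd d x ->
      HasSum (Zd d) (fun y => law r p N m y * conv d r p N k (n - m) (vsub x y))
        (nnsum (Zd d) (fun y => law r p N m y * conv d r p N k (n - m) (vsub x y)))).
    { intros m x Hin Hx. destruct (Hm m Hin). destruct (IH (n - m)%nat) as [Hc [Hmu _]].
      eapply core_a; eauto. }
    assert (Hnn : forall m, In m (seq 1 n) ->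
       nng (Zd d) (fun x => nnsum (Zd d) (fun y => law r p N m y * conv d r p N k (n - m) (vsub x y)))).
    { intros m Hin x Hx. eapply HS_nonneg. apply Ha; auto. }
    assert (HM : HasSum (Zd d) (conv d r p N (S k) n)
                   (lsum (fun m => wt r N m * MU d r p N k (n - m)) (seq 1 n))).
    { eapply HS_ext; [|apply (HS_lsum decZ (Zd d)
        (fun m x => nnsum (Zd d) (fun y => law r p N m y * conv d r p N k (n - m) (vsub x y))))].
      - intros x Hx. rewrite conv_S. reflexivity.
      - auto.
      - intros m Hin. destruct (Hm m Hin). destruct (IH (n - m)%nat) as [Hc [Hmu _]].
        apply core_b; auto. }
    assert (HQ : HasSum (Zd d) (fun x => zn2 x * conv d r p N (S k) n x)
                   (lsum (fun m => wt r N m * QQ d r p N k (n - m) + MU d r p N k (n - m) * V m) (seq 1 n))).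
    { eapply HS_ext; [|apply (HS_lsum decZ (Zd d)
        (fun m x => zn2 x * nnsum (Zd d) (fun y => law r p N m y * conv d r p N k (n - m) (vsub x y))))].
      - intros x Hx. rewrite conv_S. simpl. rewrite lsum_scal. reflexivity.
      - intros m Hin x Hx. apply Rmult_le_pos; [apply zn2_nonneg | apply Hnn; auto].
      - intros m Hin. destruct (Hm m Hin). destruct (IH (n - m)%nat) as [Hc [Hmu [Hq _]]].
        apply (core_c d _ _ _ _ (Sm m)); auto. apply HV; auto. }
    assert (E1 : MU d r p N (S k) n = lsum (fun m => wt r N m * MU d r p N k (n - m)) (seq 1 n))
      by (unfold MU; eapply HS_nnsum; eauto).
    assert (E2 : QQ d r p N (S k) n = lsum (fun m => wt r N m * QQ d r p N k (n - m) + MU d r p N k (n - m) * V m) (seq 1 n))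
      by (unfold QQ; eapply HS_nnsum; eauto).
    rewrite E1, E2.
    split; [|split; [auto|split; [auto|]]].
    + intros x Hx. rewrite conv_S. apply lsum_nonneg. intros m Hin. apply Hnn; auto.
    + rewrite <- lsum_scal. apply lsum_le. intros m Hin. destruct (Hm m Hin) as [H1 H2].
      destruct (IH (n - m)%nat) as [Hc [Hmu [Hq Hb]]].
      destruct (HV m H1) as [HVs HVb].
      assert (Hw : 0 <= wt r N m) by (eapply HS_nonneg; apply Hl1; auto).
      assert (Hmu0 : 0 <= MU d r p N k (n - m)) by (eapply HS_nonneg; eauto).
      rewrite minus_INR in Hb by auto.
      assert (wt r N m * QQ d r p N k (n - m) <= wt r N m * (K * (INR n - INR m) * MU d r p N k (n - m)))
        by (apply Rmult_le_compat_l; auto).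
      assert (MU d r p N k (n - m) * V m <= MU d r p N k (n - m) * (wt r N m * (K * INR m)))
        by (apply Rmult_le_compat_l; auto).
      nra.
Qed.

Lemma lsum_zero {A} (L : list A) : lsum (fun _ => 0) L = 0.
Proof. induction L; simpl; [reflexivity | rewrite IHL; ring]. Qed.

Lemma conv_support d r p N k : forall n x, (n < k)%nat -> Zd d x -> conv d r p N k n x = 0.
Proof.
  induction k as [|k IH]; intros n x Hn Hx; [lia|].
  rewrite conv_S. rewrite <- (lsum_zero (seq 1 n)). apply lsum_ext. intros m Hm.
  apply in_seq in Hm. apply (HS_nnsum (Zd d)). eapply HS_ext; [|apply HS_zero].
  intros y Hy. cbv beta. rewrite IH; [ring|lia|apply A_vsub; auto].
Qed.

Lemma lsum_filter_le (f : nat -> R) n L :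
  (forall k, (n < k)%nat -> f k = 0) ->
  lsum f L <= lsum f (filter (fun k => (k <=? n)%nat) L).
Proof.
  intros Hz. induction L as [|k L IH]; simpl; [lra|].
  destruct (k <=? n)%nat eqn:E; simpl; [lra|].
  apply Nat.leb_gt in E. rewrite Hz by auto. lra.
Qed.

Lemma HS_nat_fin (f : nat -> R) n :
  (forall k, 0 <= f k) -> (forall k, (n < k)%nat -> f k = 0) ->
  HasSum (fun _ : nat => True) f (lsum f (seq 0 (S n))).
Proof.
  intros H0 Hz. split.
  - intros v [L [Hn [Hf ->]]]. eapply Rle_trans; [apply (lsum_filter_le f n L Hz)|].
    apply (lsum_incl Nat.eq_dec).
    + apply NoDup_filter; auto.
    + intros k Hk. apply filter_In in Hk as [_ Hk]. apply Nat.leb_le in Hk. apply in_seq. lia.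
    + auto.
  - intros b Hb. apply Hb. exists (seq 0 (S n)). split; [apply seq_NoDup|]. split; [|reflexivity].
    apply Forall_forall; auto.
Qed.

Lemma RN_pos (r : nat -> R) N : (forall n, (1 <= n)%nat -> 0 < r n) -> (1 <= N)%nat -> 0 < RN r N.
Proof.
  intros Hr HN. unfold RN. destruct N; [lia|]. simpl.
  assert (0 <= lsum r (seq 2 N)).
  { apply lsum_nonneg. intros a Ha. apply in_seq in Ha. left; apply Hr; lia. }
  pose proof (Hr 1%nat (le_n 1)). lra.
Qed.

Theorem mainTheorem9
  (d : nat) (hd : (1 <= d)%nat) (c : R) (hc : 0 < c)
  (a : R) (ha : 0 < a) (r : nat -> R) (p : nat -> list Z -> R)
  (hr_pos : forall n, (1 <= n)%nat -> 0 < r n)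
  (hr_asym : Un_cv (fun n => INR n * r n) a)
  (hp_nonneg : forall n x, Zd d x -> 0 <= p n x)
  (hp_prob : forall n, (1 <= n)%nat -> HasSum (Zd d) (p n) 1)
  (hp_mean : forall n i, (1 <= n)%nat -> (i < d)%nat ->
      exists s, HasSum (Zd d) (fun x => Rmax (coord x i) 0 * p n x) s /\
                HasSum (Zd d) (fun x => Rmax (- coord x i) 0 * p n x) s)
  (hp_var : exists K, forall n, (1 <= n)%nat ->
      fsum_le (Zd d) (fun x => znorm x ^ 2 * p n x) (K * INR n))
  (hp_lclt : forall eps, 0 < eps -> exists n0, forall n, (n0 <= n)%nat -> (1 <= n)%nat ->
      forall x, Zd d x ->
      Rabs (sqrt (INR n) ^ d * p n x
            - gauss d c (map (fun z => IZR z / sqrt (INR n)) x)) <= eps) :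
  exists C, 0 < C /\
    forall (N : nat) (lam : R) (n : nat) (M : R),
      (1 <= N)%nat -> 0 < lam -> 0 < Uscal d r p N lam n -> 0 < M ->
      fsum_le (fun x => Zd d x /\ znorm x > M * sqrt (INR n))
        (fun x => Ubold d r p N lam n x / Uscal d r p N lam n)
        (C / M ^ 2).
Proof.
  destruct hp_var as [K HK].
  assert (HK0 : 0 <= K).
  { pose proof (HK 1%nat (le_n 1) nil (NoDup_nil _) (Forall_nil _)). simpl in H. lra. }
  exists (K + 1). split; [lra|].
  intros N lam n M HN Hlam HU HM L HLnd HLf.
  pose proof (RN_pos r N hr_pos HN) as HRN.
  assert (Hwt : forall m, (1 <= m)%nat -> 0 <= wt r N m).
  { intros m Hm. unfold wt. destruct (_ && _)%bool; [|lra].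
    pose proof (hr_pos m Hm). apply Rlt_le. apply Rdiv_lt_0_compat; auto. }
  assert (Hl0 : forall m, (1 <= m)%nat -> nng (Zd d) (law r p N m)).
  { intros m Hm y Hy. rewrite law_wt. apply Rmult_le_pos; auto. }
  assert (Hl1 : forall m, (1 <= m)%nat -> HasSum (Zd d) (law r p N m) (wt r N m)).
  { intros m Hm. replace (wt r N m) with (wt r N m * 1) by ring.
    eapply HS_ext; [|apply HS_scal; [apply Hwt; auto|apply (hp_prob m Hm)]].
    intros y Hy. simpl. rewrite law_wt. reflexivity. }
  set (V := fun m => nnsum (Zd d) (fun y => law r p N m y * zn2 y)).
  assert (HV : forall m, (1 <= m)%nat -> HasSum (Zd d) (fun y => law r p N m y * zn2 y) (V m) /\
                           V m <= wt r N m * (K * INR m)).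
  { intros m Hm. destruct (HS_exists _ _ _ (HK m Hm)) as [s Hs].
    assert (Hs2 : s <= K * INR m) by (eapply HS_lub; eauto).
    assert (H3 : HasSum (Zd d) (fun y => law r p N m y * zn2 y) (wt r N m * s)).
    { eapply HS_ext; [|apply HS_scal; [apply Hwt; auto|exact Hs]].
      intros y Hy. cbv beta. rewrite law_wt, znorm_sq. ring. }
    unfold V. rewrite (HS_nnsum _ _ _ H3). split; auto.
    apply Rmult_le_compat_l; auto. }
  set (Sm := fun m i => wt r N m * nnsum (Zd d) (fun x => Rmax (coord x i) 0 * p m x)).
  assert (HSm : forall m i, (1 <= m)%nat -> (i < d)%nat ->
     HasSum (Zd d) (fun y => law r p N m y * ppos (coord y i)) (Sm m i) /\
     HasSum (Zd d) (fun y => law r p N m y * pneg (coord y i)) (Sm m i)).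
  { intros m i Hm Hi. destruct (hp_mean m i Hm Hi) as [s [H1 H2]].
    unfold Sm. rewrite (HS_nnsum _ _ _ H1). split.
    - eapply HS_ext; [|apply HS_scal; [apply Hwt; auto|exact H1]].
      intros y Hy. simpl. rewrite law_wt. unfold ppos. ring.
    - eapply HS_ext; [|apply HS_scal; [apply Hwt; auto|exact H2]].
      intros y Hy. simpl. rewrite law_wt. unfold pneg. ring. }
  pose proof (conv_inv d r p N K V Sm HK0 Hl0 Hl1 HV
     (fun m i Hm Hi => proj1 (HSm m i Hm Hi)) (fun m i Hm Hi => proj2 (HSm m i Hm Hi))) as Hinv.
  set (Ub := fun x => lsum (fun k => lam ^ k * conv d r p N k n x) (seq 0 (S n))).
  assert (HUb : forall x, Zd d x -> Ubold d r p N lam n x = Ub x).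
  { intros x Hx. unfold Ubold, Ub. apply HS_nnsum. apply HS_nat_fin.
    - intros k. apply Rmult_le_pos; [apply pow_le; lra|]. apply (proj1 (Hinv k n)); auto.
    - intros k Hk. rewrite conv_support; auto. ring. }
  assert (HMU0 : forall k, (n < k)%nat -> MU d r p N k n = 0).
  { intros k Hk. unfold MU. apply HS_nnsum. eapply HS_ext; [|apply HS_zero].
    intros x Hx. rewrite conv_support; auto. }
  set (U := Uscal d r p N lam n) in *.
  assert (HUv : U = lsum (fun k => lam ^ k * MU d r p N k n) (seq 0 (S n))).
  { unfold U, Uscal. apply HS_nnsum. apply HS_nat_fin.
    - intros k. apply Rmult_le_pos; [apply pow_le; lra|]. eapply HS_nonneg. apply (Hinv k n).
    - intros k Hk. rewrite HMU0; auto. ring. }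
  assert (HLx : forall x, In x L -> Zd d x /\ znorm x > M * sqrt (INR n)).
  { intros x Hx. rewrite Forall_forall in HLf. auto. }
  assert (HUb0 : forall x, Zd d x -> 0 <= Ub x).
  { intros x Hx. apply lsum_nonneg. intros k _. apply Rmult_le_pos; [apply pow_le; lra|].
    apply (proj1 (Hinv k n)); auto. }
  rewrite (lsum_ext _ (fun x => / U * Ub x)).
  2:{ intros x Hx. rewrite HUb by (apply HLx; auto). unfold Rdiv. ring. }
  rewrite lsum_scal.
  assert (HC : 0 < (K + 1) / M ^ 2) by (apply Rdiv_lt_0_compat; [lra | apply pow_lt; lra]).
  destruct n as [|n'].
  - rewrite (lsum_ext _ (fun _ => 0)).
    + rewrite lsum_zero. lra.
    + intros x Hx. destruct (HLx x Hx) as [Hz Hgt]. unfold Ub. simpl.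
      destruct (list_eq_dec Z.eq_dec x (zerov d)) as [e|ne]; [|ring].
      subst. exfalso. unfold znorm in Hgt. change (sqnormR (toR (zerov d))) with (zn2 (zerov d)) in Hgt. rewrite zn2_zerov in Hgt.
      simpl INR in Hgt. rewrite sqrt_0 in Hgt. lra.
  - set (n := S n') in *.
    assert (Hn : 0 < INR n) by (apply lt_0_INR; unfold n; lia).
    assert (Hc1 : forall x, In x L -> Ub x <= zn2 x * Ub x / (M ^ 2 * INR n)).
    { intros x Hx. destruct (HLx x Hx) as [Hz Hgt].
      assert (0 <= M * sqrt (INR n)) by (apply Rmult_le_pos; [lra|apply sqrt_pos]).
      assert (Hsq : M ^ 2 * INR n < zn2 x).
      { rewrite <- znorm_sq. replace (M ^ 2 * INR n) with ((M * sqrt (INR n)) ^ 2).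
        - nra.
        - rewrite Rpow_mult_distr, pow2_sqrt; lra. }
      pose proof (HUb0 x Hz).
      assert (0 < M ^ 2 * INR n) by (apply Rmult_lt_0_compat; [apply pow_lt|]; lra).
      apply (Rmult_le_reg_r (M ^ 2 * INR n)); auto. field_simplify; [|lra]. nra. }
    assert (Hc2 : lsum (fun x => zn2 x * Ub x) L <= K * INR n * U).
    { rewrite (lsum_ext _ (fun x => lsum (fun k => lam ^ k * (zn2 x * conv d r p N k n x)) (seq 0 (S n)))).
      2:{ intros x _. unfold Ub. rewrite <- lsum_scal. apply lsum_ext. intros; ring. }
      rewrite lsum_swap. rewrite HUv, <- lsum_scal. apply lsum_le. intros k _.
      rewrite lsum_scal. destruct (Hinv k n) as [Hc [Hmu [Hq Hb]]].
      assert (lsum (fun x => zn2 x * conv d r p N k n x) L <= QQ d r p N k n).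
      { eapply HS_le; eauto. rewrite Forall_forall in HLf |- *. intros x Hx; apply HLf; auto. }
      assert (0 < lam ^ k) by (apply pow_lt; lra).
      assert (lam ^ k * lsum (fun x => zn2 x * conv d r p N k n x) L <= lam ^ k * QQ d r p N k n)
        by (apply Rmult_le_compat_l; lra).
      assert (lam ^ k * QQ d r p N k n <= lam ^ k * (K * INR n * MU d r p N k n))
        by (apply Rmult_le_compat_l; lra).
      lra. }
    assert (Hc3 : lsum Ub L <= K * U / M ^ 2).
    { eapply Rle_trans; [apply lsum_le; exact Hc1|].
      rewrite (lsum_ext _ (fun x => / (M ^ 2 * INR n) * (zn2 x * Ub x))) by (intros; unfold Rdiv; ring).
      rewrite lsum_scal.
      assert (0 < M ^ 2 * INR n) by (apply Rmult_lt_0_compat; [apply pow_lt|]; lra).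
      apply (Rmult_le_reg_l (M ^ 2 * INR n)); auto.
      rewrite <- Rmult_assoc, Rinv_r, Rmult_1_l by lra.
      assert (0 < M ^ 2) by (apply pow_lt; lra).
      replace (M ^ 2 * INR n * (K * U / M ^ 2)) with (K * INR n * U) by (field; lra). lra. }
    apply (Rmult_le_reg_l U); auto. rewrite <- Rmult_assoc, Rinv_r by lra. rewrite Rmult_1_l.
    eapply Rle_trans; [exact Hc3|]. unfold Rdiv.
    assert (0 < / M ^ 2) by (apply Rinv_0_lt_compat, pow_lt; lra). nra.
Qed.
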